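(* Let $K$ be a field of characteristic $\neq 2$, $n\ge1$, and let $\mathcal C$ be an EACP over $K$ with natural basis $\{h_1,\dots,h_n,r\}$ and structural constants $a_{ij},b_i$. For $a\in\mathcal C$ let $L_a(x)=ax$, write $L_i=L_{h_i}$, and for $x=\sum_i x_ih_i+ur$ let ${\bf b}(x)=\sum_{i=1}^n b_ix_i$. Then for all $x\in\mathcal C$, all $m\ge1$ and all $i,i_1,\dots,i_m\in\{1,\dots,n\}$: $$L_{i_m}\circ L_{i_{m-1}}\circ\cdots\circ L_{i_1}(x)=\Big(\frac1{2^{m-1}}\prod_{j=1}^{m-1}b_{i_j}\Big)L_{i_m}(x),$$ $$L_r\circ L_i(x)=\frac12\sum_{j=1}^n a_{ij}L_j(x),\qquad L_i\circ L_r(x)=\frac{{\bf b}(x)}2\,L_i(r).$$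
   Context: An EACP over a field $K$ (characteristic $\neq 2$) is a $K$-algebra $\mathcal C$ with a basis $\{h_1,\dots,h_n,r\}$ (called a natural basis) whose multiplication is determined by bilinearity from $$h_ir=rh_i=\tfrac12\Big(\sum_{j=1}^n a_{ij}h_j+b_ir\Big),\qquad h_ih_j=0\ (i,j=1,\dots,n),\qquad rr=0,$$ for some constants $a_{ij},b_i\in K$. An empty product equals $1$. *)

(* Defs.v *)
From HB Require Import structures.
From mathcomp Require Import all_boot all_order all_algebra.
Set Implicit Arguments. Unset Strict Implicit. Unset Printing Implicit Defensive.
Import GRing.Theory.
Local Open Scope ring_scope.

Definition is_EACP (K : fieldType) (V : lmodType K) (n : nat)
  (mul : V -> V -> V) (h : 'I_n -> V) (r : V)
  (a : 'I_n -> 'I_n -> K) (b : 'I_n -> K) : Prop :=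
  [/\
      (forall (c : K) (x y z : V), mul (c *: x + y) z = c *: mul x z + mul y z),
      (forall (c : K) (x y z : V), mul z (c *: x + y) = c *: mul z x + mul z y),
      (forall x : V, exists (xc : 'I_n -> K) (u : K),
          x = \sum_(i < n) xc i *: h i + u *: r),
      (forall (xc : 'I_n -> K) (u : K),
          \sum_(i < n) xc i *: h i + u *: r = 0 -> (forall i, xc i = 0) /\ u = 0) &
      [/\ forall i, mul (h i) r = 2%:R^-1 *: (\sum_(j < n) a i j *: h j + b i *: r),
          forall i, mul r (h i) = 2%:R^-1 *: (\sum_(j < n) a i j *: h j + b i *: r),
          forall i j, mul (h i) (h j) = 0 &
          mul r r = 0]].

Fixpoint iterL (K : fieldType) (V : lmodType K) (n : nat)
  (mul : V -> V -> V) (h : 'I_n -> V) (idx : nat -> 'I_n) (m : nat) (x : V) : V :=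
  match m with
  | 0 => x
  | m'.+1 => mul (h (idx m)) (iterL mul h idx m' x)
  end.

(* Main.v *)
Require Import Defs.
From HB Require Import structures.
From mathcomp Require Import all_boot all_order all_algebra.
From mathcomp Require Import ring.
Import GRing.Theory.
Local Open Scope ring_scope.

Set Implicit Arguments.
Section Aux.
Variables (K : fieldType) (V : lmodType K) (n : nat)
  (mul : V -> V -> V) (h : 'I_n -> V) (r : V)
  (a : 'I_n -> 'I_n -> K) (b : 'I_n -> K).
Hypothesis H : is_EACP mul h r a b.

Lemma mul0l z : mul 0 z = 0.
Proof.
case: H => Hl _ _ _ _.
have := Hl 1 0 0 z; rewrite !scale1r addr0 => E.
by apply: (addrI (mul 0 z)); rewrite addr0 -E.
Qed.
Lemma mul0r z : mul z 0 = 0.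
Proof.
case: H => _ Hr _ _ _.
have := Hr 1 0 0 z; rewrite !scale1r addr0 => E.
by apply: (addrI (mul z 0)); rewrite addr0 -E.
Qed.
Lemma mulDl x y z : mul (x + y) z = mul x z + mul y z.
Proof. case: H => Hl _ _ _ _. by have := Hl 1 x y z; rewrite !scale1r. Qed.
Lemma mulDr x y z : mul z (x + y) = mul z x + mul z y.
Proof. case: H => _ Hr _ _ _. by have := Hr 1 x y z; rewrite !scale1r. Qed.
Lemma mulZl c x z : mul (c *: x) z = c *: mul x z.
Proof. case: H => Hl _ _ _ _. by have := Hl c x 0 z; rewrite !addr0 mul0l addr0. Qed.
Lemma mulZr c x z : mul z (c *: x) = c *: mul z x.
Proof. case: H => _ Hr _ _ _. by have := Hr c x 0 z; rewrite !addr0 mul0r addr0. Qed.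
Lemma mul_sumr z (F : 'I_n -> V) : mul z (\sum_(i < n) F i) = \sum_(i < n) mul z (F i).
Proof. by apply: (big_morph (fun x => mul z x)) => [x y|]; rewrite ?mulDr ?mul0r. Qed.

Lemma Lh k (c : 'I_n -> K) d :
  mul (h k) (\sum_(j < n) c j *: h j + d *: r) = d *: mul (h k) r.
Proof.
case: H => _ _ _ _ [_ _ Hhh _].
rewrite mulDr mul_sumr mulZr big1 ?add0r // => j _.
by rewrite mulZr Hhh scaler0.
Qed.
Lemma Lr (c : 'I_n -> K) d :
  mul r (\sum_(j < n) c j *: h j + d *: r) = \sum_(j < n) c j *: mul r (h j).
Proof.
case: H => _ _ _ _ [_ _ _ Hrr].
rewrite mulDr mul_sumr mulZr Hrr scaler0 addr0.
by apply: eq_bigr => j _; rewrite mulZr.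
Qed.

Lemma hr_form i :
  mul (h i) r = \sum_(j < n) (2%:R^-1 * a i j) *: h j + (2%:R^-1 * b i) *: r.
Proof.
case: H => _ _ _ _ [Hhr _ _ _].
rewrite Hhr scalerDr scaler_sumr scalerA; congr (_ + _).
by apply: eq_bigr => j _; rewrite scalerA.
Qed.

Lemma LhLh k i x : mul (h k) (mul (h i) x) = (b i / 2%:R) *: mul (h k) x.
Proof.
have [xc [u ->]] : exists (xc : 'I_n -> K) (u : K),
          x = \sum_(i < n) xc i *: h i + u *: r by case: H => _ _ Hs _ _; apply: Hs.
rewrite [mul (h i) _]Lh [in RHS]Lh mulZr hr_form Lh !scalerA.
by congr (_ *: _); rewrite mulrC [_ / _]mulrC.
Qed.
End Aux.
Unset Implicit Arguments.

Theorem mainTheorem11 (K : fieldType) (V : lmodType K) (n : nat)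
  (mul : V -> V -> V) (h : 'I_n -> V) (r : V)
  (a : 'I_n -> 'I_n -> K) (b : 'I_n -> K) :
  (2%:R : K) != 0 -> (1 <= n)%N ->
  is_EACP mul h r a b ->
  [/\ (* L_{i_m} o ... o L_{i_1}(x) = (2^{-(m-1)} prod_{j=1}^{m-1} b_{i_j}) L_{i_m}(x) *)
      forall (x : V) (m : nat) (idx : nat -> 'I_n), (1 <= m)%N ->
        iterL mul h idx m x =
        ((2%:R^-1) ^+ m.-1 * \prod_(1 <= j < m) b (idx j)) *: mul (h (idx m)) x,
      (* L_r o L_i (x) = 1/2 sum_j a_ij L_j(x) *)
      forall (x : V) (i : 'I_n),
        mul r (mul (h i) x) = 2%:R^-1 *: \sum_(j < n) a i j *: mul (h j) x &
      (* L_i o L_r (x) = b(x)/2 L_i(r), where x = sum_j x_j h_j + u r *)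
      forall (x : V) (xc : 'I_n -> K) (u : K) (i : 'I_n),
        x = \sum_(j < n) xc j *: h j + u *: r ->
        mul (h i) (mul r x) = ((\sum_(j < n) b j * xc j) / 2%:R) *: mul (h i) r].
Proof.
move=> H2 Hn H; split.
- move=> x m idx; elim: m => [//|m IH] _.
  case: m IH => [_|m IH].
    by rewrite /= big_geq // expr0 mul1r scale1r.
  rewrite [iterL _ _ _ _ _]/= -/(iterL mul h idx m.+1 x) IH //.
  rewrite (mulZr H) (LhLh H) scalerA [in RHS]big_nat_recr //= exprS.
  by congr (_ *: _); ring.
- move=> x i.
  have [xc [u ->]] : exists (xc : 'I_n -> K) (u : K),
          x = \sum_(i < n) xc i *: h i + u *: r by case: H => _ _ Hs _ _; apply: Hs.
  case: (H) => _ _ _ _ [Hhr Hrh _ Hrr].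
  rewrite [mul (h i) _](Lh H) (mulZr H) (hr_form H) (Lr H) scaler_sumr [in RHS]scaler_sumr.
  apply: eq_bigr => j _.
  by rewrite (Lh H) Hhr -Hrh !scalerA; congr (_ *: _); ring.
- move=> x xc u i ->.
  case: (H) => _ _ _ _ [Hhr Hrh _ _].
  rewrite (Lr H) (mul_sumr H) mulr_suml scaler_suml.
  apply: eq_bigr => j _.
  rewrite (mulZr H) Hrh -Hhr (LhLh H) scalerA.
  by rewrite mulrA [b j * _]mulrC.
Qed.
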